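(* Let $\Gamma$ be an inhomogeneous $Y$-semigroup. Assume that $Y_1 \subseteq \mathcal{D}(A_\Gamma)$ and that $\Gamma$ is $Y_1$-super strongly $s$-continuous and $Y_1$-strongly $t$-continuous. Then \[ \frac{\partial}{\partial s} \Gamma(s,t)f=-A_\Gamma(s) \Gamma(s,t)f \qquad \forall (s,t) \in \Delta_J,\ \forall f \in Y_1 . \]
   Context: Let $(Y,\|\cdot\|)$ be a real separable Banach space and $(Y_1,\|\cdot\|_{Y_1})$ a real separable Banach space continuously embedded in $Y$ (i.e. $Y_1\subseteq Y$ and $\|f\|\le c_1\|f\|_{Y_1}$ for all $f\in Y_1$, for some constant $c_1$). $\mathcal B(Y)$ denotes the bounded linear operators on $Y$. $J$ is either $\mathbb{R}^+$ or $[0,T_\infty]$ for some $T_\infty>0$, and $\Delta_J=\{(s,t)\in J^2: s\le t\}$, $J(s)=\{t\in J: t\ge s\}$. An inhomogeneous $Y$-semigroup is a map $\Gamma:\Delta_J\to\mathcal B(Y)$ with $\Gamma(t,t)=I$ for all $t\in J$ and $\Gamma(s,r)\Gamma(r,t)=\Gamma(s,t)$ whenever $s\le r\le t$ in $J$. Its generator: for $t\in J$, $\mathcal D(A_\Gamma(t))$ is the set of $f\in Y$ such that $\lim_{h\downarrow0,\,t+h\in J}h^{-1}(\Gamma(t,t+h)-I)f$ and $\lim_{h\downarrow 0,\,t-h\in J}h^{-1}(\Gamma(t-h,t)-I)f$ exist in $Y$ and are equal, $A_\Gamma(t)f$ being this common value; $\mathcal D(A_\Gamma)=\bigcap_{t\in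 J}\mathcal D(A_\Gamma(t))$. All limits are in the $Y$-norm unless stated. $\Gamma$ is $Y_1$-strongly $t$-continuous if for every $f\in Y_1$ and $s\in J$ the map $u\mapsto\Gamma(s,u)f$ is continuous from $J(s)$ into $(Y,\|\cdot\|)$. $\Gamma$ is $Y_1$-super strongly $s$-continuous if $\Gamma(s,t)Y_1\subseteq Y_1$ for all $(s,t)\in\Delta_J$ and, for every $f\in Y_1$ and $t\in J$, the map $u\mapsto\Gamma(u,t)f$ is continuous on $\{u\in J:u\le t\}$ for the norm $\|\cdot\|_{Y_1}$. Derivatives at endpoints of the domain are one-sided. *)

(* Defs.v *)
From HB Require Import structures.
From mathcomp Require Import all_boot all_order all_algebra.
From mathcomp Require Import all_classical all_reals all_analysis.
Set Implicit Arguments. Unset Strict Implicit. Unset Printing Implicit Defensive.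
Import Order.TTheory GRing.Theory Num.Theory.
Import numFieldNormedType.Exports.
Local Open Scope classical_set_scope.
Local Open Scope ring_scope.

Definition separable {R : realType} (V : normedModType R) : Prop :=
  exists D : set V, countable D /\ closure D = [set: V].

Definition time_interval {R : realType} (J : set R) : Prop :=
  J = `[0, +oo[%classic \/ exists Tinf : R, 0 < Tinf /\ J = `[0, Tinf]%classic.

Definition inhom_semigroup {R : realType} {Y : normedModType R}
  (J : set R) (Gam : R -> R -> {linear Y -> Y}) : Prop :=
  (forall s t, J s -> J t -> s <= t -> continuous (Gam s t)) /\
  (forall t, J t -> forall f, Gam t t f = f) /\
  (forall s r t, J s -> J r -> J t -> s <= r -> r <= t ->
     forall f, Gam s r (Gam r t f) = Gam s t f).

(* One-sided limits, h decreasing to 0, restricted to the admissible h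
   (vacuous when no admissible h exists, i.e. one-sided at endpoints). *)
Definition right_lim_at0 {R : realType} {Y : normedModType R}
  (adm : R -> Prop) (F : R -> Y) (l : Y) : Prop :=
  forall e : R, 0 < e -> exists d : R, 0 < d /\
    forall h : R, 0 < h -> h < d -> adm h -> `|F h - l| < e.

(* g = A_Gamma(t) f, i.e. f \in D(A_Gamma(t)) with A_Gamma(t) f = g:
   both limits h^{-1}(Gamma(t,t+h)-I)f and h^{-1}(Gamma(t-h,t)-I)f
   (h decreasing to 0, t+h resp. t-h in J) exist and equal g. *)
Definition generator_at {R : realType} {Y : normedModType R}
  (J : set R) (Gam : R -> R -> {linear Y -> Y}) (t : R) (f g : Y) : Prop :=
  right_lim_at0 (fun h => J (t + h)) (fun h => h^-1 *: (Gam t (t + h) f - f)) g /\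
  right_lim_at0 (fun h => J (t - h)) (fun h => h^-1 *: (Gam (t - h) t f - f)) g.

Definition deriv_within {R : realType} {Y : normedModType R}
  (D : set R) (F : R -> Y) (s : R) (d : Y) : Prop :=
  right_lim_at0 (fun h => D (s + h)) (fun h => h^-1 *: (F (s + h) - F s)) d /\
  right_lim_at0 (fun h => D (s - h)) (fun h => (- h)^-1 *: (F (s - h) - F s)) d.

(* Main.v *)
Require Import Defs.
From HB Require Import structures.
From mathcomp Require Import all_boot all_order all_algebra.
From mathcomp Require Import all_classical all_reals all_analysis.
Import Order.TTheory GRing.Theory Num.Theory.
Import numFieldNormedType.Exports.
Local Open Scope classical_set_scope.
Local Open Scope ring_scope.

Lemma within_eps (R : realType) (V : normedModType R) (A : set R) (G : R -> V) s :
  {within A, continuous G} -> A s ->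
  forall eta : R, 0 < eta -> exists d : R, 0 < d /\
    forall u, `|s - u| < d -> A u -> `|G u - G s| < eta.
Proof.
move=> /subspace_continuousP /(_ s) cG As eta eta0.
have := cG As; move/cvgrPdist_lt => /(_ eta eta0).
move=> /nbhs_ballP [d d0 Hd]; exists d; split => // u su Au.
rewrite distrC; apply: Hd => //; rewrite -ball_normE /ball_ /=.
Qed.

Lemma small_inv (R : realType) (d : R) : 0 < d ->
  exists N : nat, forall n : nat, (N <= n)%N -> n.+1%:R^-1 < d.
Proof.
move=> d0; exists (Num.truncn d^-1) => n Nn.
have h1 := Num.Theory.truncnS_gt d^-1.
have h2 : (Num.truncn d^-1).+1%:R <= n.+1%:R :> R by rewrite ler_nat ltnS.
rewrite -(invrK d) ltf_pV2 ?posrE ?invr_gt0 //; exact: lt_le_trans h1 h2.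
Qed.

Definition packlin (R : realType) (U V : lmodType R) (f : U -> V) (lf : linear f) : {linear U -> V} := HB.pack f (GRing.isLinear.Build _ _ _ _ _ lf).

Lemma key (R : realType) (Y1 : completeNormedModType R) (Y : normedModType R)
  (adm : R -> Prop) (T : R -> Y1 -> Y) (x : R -> Y1) (x0 : Y1) (g : Y) :
  (forall h, 0 < h -> adm h -> linear (T h)) ->
  (forall h, 0 < h -> adm h -> exists C, forall y, `|T h y| <= C * `|y|) ->
  (forall y, exists gy, right_lim_at0 adm (fun h => T h y) gy) ->
  right_lim_at0 adm (fun h => T h x0) g ->
  (forall eta, 0 < eta -> exists d, 0 < d /\
      forall h, 0 < h -> h < d -> adm h -> `|x h - x0| < eta) ->
  right_lim_at0 adm (fun h => T h (x h)) g.
Proof.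
move=> Tlin Tbd Tpt Tx0 xc e e0.
apply: contrapT => Hn.
have Hs : forall n : nat, exists h, [/\ 0 < h, h < n.+1%:R^-1, adm h & e <= `|T h (x h) - g|].
  move=> n; apply: contrapT => Hno; apply: Hn; exists n.+1%:R^-1; split.
    by rewrite invr_gt0 ltr0n.
  move=> h h0 hd ah; rewrite ltNge; apply/negP => Hle; apply: Hno; by exists h.
have [hs Hhs] := choice Hs.
pose F := [set f : Y1 -> Y | exists n, f = T (hs n)].
have FP : forall f, F f -> bounded_fun_norm f /\ linear f.
  move=> f [n ->]; have [h0 hn ah _] := Hhs n; split; last exact: Tlin.
  have [C HC] := Tbd _ h0 ah; move=> r; exists (`|C| * r) => y yr.
  apply: (le_trans (HC y)); apply: (le_trans (ler_wpM2r (normr_ge0 y) (ler_norm C))).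
  by rewrite ler_wpM2l.
have Fpt : pointwise_bounded F.
  move=> y; have [gy Hy] := Tpt y; have [d [d0 Hd]] := Hy 1 ltr01.
  have [N HN] := small_inv _ d d0.
  exists (`|gy| + 1 + \sum_(k < N) `|T (hs k) y|) => f [n ->].
  have sum0 : 0 <= \sum_(k < N) `|T (hs k) y| by apply: sumr_ge0 => k _.
  case: (leqP N n) => Nn.
    have [h0 hn ah _] := Hhs n.
    have Hlt := Hd (hs n) h0 (lt_trans hn (HN n Nn)) ah.
    have : `|T (hs n) y| <= `|gy| + 1.
      rewrite -(subrK gy (T (hs n) y)) (le_trans (ler_normD _ _)) //.
      by rewrite addrC lerD2l ltW.
    move=> /le_trans; apply; by rewrite lerDl.
  rewrite (bigD1 (Ordinal Nn)) //= addrCA lerDl.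
  apply: addr_ge0; last by apply: sumr_ge0.
  exact: addr_ge0.
have [M HM] := Banach_Steinhauss FP Fpt 1.
have bnd : forall n (y : Y1) eta, 0 < eta -> `|y| <= eta -> `|T (hs n) y| <= eta * M.
  move=> n y eta eta0 ye; have [h0 _ ah _] := Hhs n.
  pose L := packlin _ _ _ _ (Tlin _ h0 ah).
  have : `|L (eta^-1 *: y)| <= M.
    apply: HM; first by exists n.
    by rewrite normrZ gtr0_norm ?invr_gt0 // ler_pdivrMl // mulr1.
  by rewrite linearZ normrZ gtr0_norm ?invr_gt0 // ler_pdivrMl.
pose eta := e / 2 / (`|M| + 1).
have eta0 : 0 < eta by rewrite /eta !divr_gt0 // ltr_pwDr.
have [d1 [d10 Hd1]] := Tx0 (e / 2) (divr_gt0 e0 (ltr0Sn _ 1)).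
have [d2 [d20 Hd2]] := xc eta eta0.
have m0 : 0 < Num.min d1 d2 by rewrite lt_min d10 d20.
have [N HN] := small_inv _ _ m0.
have [h0 hn ah hle] := Hhs N.
have := HN N (leqnn N) => /(lt_trans hn); rewrite lt_min => /andP [hd1 hd2].
pose L := packlin _ _ _ _ (Tlin _ h0 ah).
have E : T (hs N) (x (hs N)) - g = L (x (hs N) - x0) + (T (hs N) x0 - g).
  by rewrite linearB /= addrA subrK.
move: hle; rewrite E => hle.
have A1 : `|L (x (hs N) - x0)| <= e / 2.
  apply: (le_trans (bnd N _ eta eta0 (ltW (Hd2 _ h0 hd2 ah)))).
  have M1 : 0 < `|M| + 1 by apply: ltr_wpDl; [exact: normr_ge0 | exact: ltr01].
  apply: (@le_trans _ _ (eta * (`|M| + 1))).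
    apply: ler_wpM2l; first exact: ltW.
    apply: le_trans (ler_norm M) _; by rewrite lerDl.
  by rewrite /eta divfK // gt_eqF.
have A2 := Hd1 _ h0 hd1 ah.
have := le_lt_trans hle (le_lt_trans (ler_normD _ _) (ler_ltD A1 A2)).
by rewrite -splitr ltxx.
Qed.

Lemma rl_weaken (R : realType) (Y : normedModType R) (adm adm' : R -> Prop) (F : R -> Y) l :
  right_lim_at0 adm F l -> (forall h, adm' h -> adm h) -> right_lim_at0 adm' F l.
Proof.
move=> H W e e0; have [d [d0 Hd]] := H e e0; exists d; split => // h h0 hd ah.
exact: Hd (W _ ah).
Qed.

Theorem theorem2p6 (R : realType)
  (Y : completeNormedModType R) (Y1 : completeNormedModType R)
  (i : {linear Y1 -> Y})
  (J : set R) (Gam : R -> R -> {linear Y -> Y}) :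
  separable Y -> separable Y1 ->
  injective i -> (exists c1 : R, forall f : Y1, `|i f| <= c1 * `|f|) ->
  time_interval J ->
  inhom_semigroup J Gam ->
  (* Y1 is contained in D(A_Gamma) *)
  (forall (f : Y1) (t : R), J t -> exists g : Y, generator_at J Gam t (i f) g) ->
  (* Y1-super strongly s-continuous *)
  (forall s t, J s -> J t -> s <= t ->
     forall f : Y1, exists g : Y1, Gam s t (i f) = i g) ->
  (forall (f : Y1) (t : R), J t ->
     exists G : R -> Y1,
       (forall u, J u -> u <= t -> i (G u) = Gam u t (i f)) /\
       {within [set u | J u /\ u <= t], continuous G}) ->
  (* Y1-strongly t-continuous *)
  (forall (f : Y1) (s : R), J s ->
     {within [set u | J u /\ s <= u], continuous (fun u => Gam s u (i f))}) ->
  forall s t, J s -> J t -> s <= t -> forall f : Y1,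
    exists g : Y,
      generator_at J Gam s (Gam s t (i f)) g /\
      deriv_within [set u | J u /\ u <= t] (fun u => Gam u t (i f)) s (- g).
Proof.
move=> _ _ _ [c1 Hc1] _ [Gcont [Gid Gcomp]] HD Hss HG _ s t Js Jt st f.
have [g0 Hg0] := Hss s t Js Jt st f.
have [g Hg] := HD g0 s Js.
exists g; split; first by rewrite Hg0.
split.
- have [G [HGi HGc]] := HG f t Jt.
  pose T h y := h^-1 *: (Gam s (s + h) (i y) - i y).
  have eGs : i (G s) = i g0 by rewrite HGi // Hg0.
  have K := @key R Y1 Y (fun h => J (s + h) /\ s + h <= t) T (fun h => G (s + h)) (G s) g.
  have K' : right_lim_at0 (fun h => J (s + h) /\ s + h <= t) (fun h => T h (G (s + h))) g.
    apply: K.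
    + move=> h h0 _ a u v; rewrite /T !linearP /=.
      have -> : a *: Gam s (s + h) (i u) + Gam s (s + h) (i v) + (a *: - i u - i v)
          = a *: (Gam s (s + h) (i u) - i u) + (Gam s (s + h) (i v) - i v).
        by rewrite scalerN scalerBr addrACA.
      by rewrite scalerDr; congr (_ + _); rewrite !scalerA mulrC.
    + move=> h h0 [Jh ht].
      have sh : s <= s + h by rewrite lerDl ltW.
      have := (linear_bounded_continuous (Gam s (s + h))).2 (Gcont _ _ Js Jh sh).
      move=> /linear_boundedP [M [Mreal HM]].
      have Mr : M < `|M| + 1 by apply: le_lt_trans (ler_norm M) _; rewrite ltrDl.
      have Hr := HM _ Mr.
      have r0 : 0 <= `|M| + 1 + 1 by rewrite !addr_ge0.
      exists (h^-1 * ((`|M| + 1 + 1) * c1)) => y.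
      rewrite /T normrZ gtr0_norm ?invr_gt0 // -mulrA; apply: ler_wpM2l; first by rewrite invr_ge0 ltW.
      apply: le_trans (ler_normB _ _) _.
      apply: (@le_trans _ _ ((`|M| + 1 + 1) * `|i y|)).
        by rewrite mulrDl mul1r lerD2r.
      rewrite -mulrA; apply: ler_wpM2l => //.
    + move=> y; have [gy [Hr _]] := HD y s Js; exists gy.
      apply: (@rl_weaken _ _ (fun h => J (s + h))); first exact: Hr.
      by move=> h [].
    + have H1 := Hg.1; rewrite /T eGs.
      apply: (@rl_weaken _ _ (fun h => J (s + h))); first exact: H1.
      by move=> h [].
    + move=> eta eta0.
      have [d [d0 Hd]] := within_eps _ _ _ _ _ HGc (conj Js st) _ eta0.
      exists d; split => // h h0 hd ah; apply: Hd => //.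
      by rewrite opprD addrA subrr add0r normrN gtr0_norm.
  move=> e e0; have [d [d0 Hd]] := K' e e0; exists d; split => // h h0 hd [Jh ht].
  have sh : s <= s + h by rewrite lerDl ltW.
  rewrite -(Gcomp s (s + h) t Js Jh Jt sh ht) -HGi //.
  have := Hd h h0 hd (conj Jh ht); rewrite /T.
  by rewrite -[i (G (s + h)) - _]opprB scalerN -opprD normrN.
- move=> e e0; have [d [d0 Hd]] := Hg.2 e e0; exists d; split => // h h0 hd [Jh ht].
  have hs : s - h <= s by rewrite lerBlDr lerDl ltW.
  rewrite -(Gcomp (s - h) s t Jh Js Jt hs st) Hg0.
  rewrite invrN scaleNr -opprD normrN; exact: Hd.
Qed.
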